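(* Let $K$ be a context, $N$ an embedded net, $\sigma_0$ a marking of state conditions, and suppose $K[N]$ is a non-interfering substitution from $\sigma_0$. Then every complete sequence $\pi$ of $K[N]$ from $(I(K[N]),\sigma_0)$ (i.e. a sequence of events from $(I(K[N]),\sigma_0)$ to $(T(K[N]),\sigma')$ for some $\sigma'$) is of the form $\Pi_0\cdot(\Pi_1\cdot\Pi_0)^*$, where: (a) $\Pi_0$ ranges over sequences consisting of $K$-events all of whose markings (including the first and last) are $K$-markings; (b) $\Pi_1$ ranges over nonempty sequences of events (of either kind) all of whose markings are $N$-markings, in which no $K$-event has a pre- or postcondition in $P_i\cup P_t$, such that if $(C_N\cup C_K,\sigma)$ and $(C_N'\cup C_K',\sigma')$ are the initial and final markings of the sequence then $C_N=P_i$ and $C_N'=P_t$, and whose first and last events are both $N$-events.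
   Context: Petri nets: an event $e$ has preconditions ${}^\bullet e$ and postconditions $e^\bullet$; events are identified with their pair $({}^\bullet e,e^\bullet)$. $e$ has concession in marking $M$ if ${}^\bullet e\subseteq M$ and $(M\setminus{}^\bullet e)\cap e^\bullet=\emptyset$; then $M\xrightarrow{e}M'=(M\setminus{}^\bullet e)\cup e^\bullet$. $e_1 I e_2$ (independence) iff $({}^\bullet e_1\cup e_1^\bullet)\cap({}^\bullet e_2\cup e_2^\bullet)=\emptyset$. A sequence $e_1\dots e_n$ from $M$ goes through markings $M=M_0\xrightarrow{e_1}M_1\cdots\xrightarrow{e_n}M_n$; these $M_j$ are its markings. A sequence $\pi$ from $M$ is of form $\Pi\cdot\Pi'$ if $\pi=\pi_1\cdot\pi_2$ (concatenation) with $\pi_1$ of form $\Pi$ from $M$ and $\pi_2$ of form $\Pi'$ from the marking reached by $\pi_1$; it is of form $\Pi^*$ if it is a finite concatenation (possibly empty) of sequences of form $\Pi$ in this sense. Conditions: a set $\mathcal C$ of control conditions with distinguished elements $\iota,\tau$ closed under injective constructors $1{:}c$, $2{:}c$, $(c,c')$ with disjoint images; a disjoint set $\mathcal S$ of state conditions. Markings are written $(C,\sigma)$, $C\subseteq\mathcal C,\sigma\subseteq\mathcal S$; ${}^Ce={}^\bullet e\cap\mathcal C$, $e^C=e^\bullet\cap\mathcal C$. An embedded net $N$: events $\mathrm{Ev}(N)$ over conditions $\mathcal C\cup\mathcal S$ and sets $I(N),T(N)\subseteq\mathcal C$. Control firing $C\xrightarrow{e}_{\mathcal C}C'$: ${}^Ce\subseteq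 C$, $(C\setminus{}^Ce)\cap e^C=\emptyset$, $C'=(C\setminus{}^Ce)\cup e^C$; control-reachability via events of the net. Standing assumption: all embedded nets satisfy $I(N),T(N)\neq\emptyset$; ${}^Ce,e^C\neq\emptyset$ for all events; $I(N)\cap T(N)=\emptyset$; ${}^Ce\cap T(N)=\emptyset$; and for all $C$ control-reachable from $I(N)$: $C\subseteq I(N)$ or $I(N)\subseteq C$ implies $C=I(N)$, and $C\subseteq T(N)$ or $T(N)\subseteq C$ implies $C=T(N)$. Tagging $1{:}C$, $1{:}e$ (tag control conditions only), similarly $2$. Gluing for $P\subseteq\mathcal C\times\mathcal C$: $P\triangleleft C=\{(c_1,c_2)\mid c_1\in C,(c_1,c_2)\in P\}\cup\{c_1\in C\mid\nexists c_2.(c_1,c_2)\in P\}$, $P\triangleright C=\{(c_1,c_2)\mid c_2\in C,(c_1,c_2)\in P\}\cup\{c_2\in C\mid\nexists c_1.(c_1,c_2)\in P\}$, applied to events on control conditions only. A context $K$ is an embedded net with a distinguished event $[-]$ whose pre/postconditions are control conditions, forming disjoint nonempty sets. $P_i=1{:}{}^\bullet[-]\times 2{:}I(N)$, $P_t=1{:}[-]^\bullet\times 2{:}T(N)$, $P=P_i\cup P_t$. $K[N]$ has events $P\triangleleft1{:}(\mathrm{Ev}(K)\setminus\{[-]\})\cup P\triangleright 2{:}\mathrm{Ev}(N)$, $I(K[N])=P\triangleleft1{:}I(K)$, $T(K[N])=P\triangleleft 1{:}T(K)$. $N$-events: $P\triangleright 2{:}e$, $e\in\mathrm{Ev}(N)$;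 $K$-events: $P\triangleleft1{:}e$, $e\in\mathrm{Ev}(K)\setminus\{[-]\}$. Standing assumption: no event of $K[N]$ is both a $K$-event and an $N$-event. A $K$-condition is $1{:}c_1$ with $c_1\in\mathcal C\setminus({}^\bullet[-]\cup[-]^\bullet)$; an $N$-internal condition is $2{:}c_2$ with $c_2\notin I(N)\cup T(N)$; an $N$-condition is an element of $P_i\cup P_t$ or an $N$-internal condition. A marking is written $(C_N\cup C_K,\sigma)$ with $C_N$ its $N$-conditions and $C_K$ its $K$-conditions. It is an $N$-marking if for all $a,a'\in{}^\bullet[-]$, $x,x'\in[-]^\bullet$, $i\in I(N)$, $t\in T(N)$: $(1{:}a,2{:}i)\in C_N\Rightarrow(1{:}a',2{:}i)\in C_N$ and $(1{:}x,2{:}t)\in C_N\Rightarrow(1{:}x',2{:}t)\in C_N$. It is a $K$-marking if it contains no $N$-internal condition and for all $a\in{}^\bullet[-]$, $x\in[-]^\bullet$, $i,i'\in I(N)$, $t,t'\in T(N)$: $(1{:}a,2{:}i)\in C_N\Rightarrow(1{:}a,2{:}i')\in C_N$ and $(1{:}x,2{:}t)\in C_N\Rightarrow(1{:}x,2{:}t')\in C_N$. A condition is internal to $N$ if it is $2{:}c_2$ with $c_2$ a pre- or postcondition of an event of $N$ not in $I(N)\cup T(N)$; $N$ is active in $M$ if $P_i\subseteq M$ or $M$ contains a condition internal to $N$. $K[N]$ is a non-interfering substitution from $\sigma_0$ if for every $M$ reachable from $(I(K[N]),\sigma_0)$: (1) $P_i\subseteq M$ implies $P_t\cap M=\emptyset$;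 (2) if $N$ is active in $M$, no $K$-event enabled in $M$ has a pre- or postcondition in $P_i\cup P_t$; (3) if $M\xrightarrow{e_1}M_1\xrightarrow{e_2}M'$, one of $e_1,e_2$ an $N$-event and the other a $K$-event, and $N$ active in $M$ and $M_1$, then $e_1Ie_2$. *)

(* Defs.v *)
From Stdlib Require Import List.
Import ListNotations.
Set Implicit Arguments.

(** Control conditions: an abstract set with distinguished iota, tau and
    injective constructors 1:c, 2:c, (c,c') with pairwise disjoint images. *)
Record CondStruct := {
  ctrl : Type;
  iota : ctrl;
  tau : ctrl;
  t1 : ctrl -> ctrl;
  t2 : ctrl -> ctrl;
  cpair : ctrl -> ctrl -> ctrl;
  t1_inj : forall x y, t1 x = t1 y -> x = y;
  t2_inj : forall x y, t2 x = t2 y -> x = y;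
  cpair_inj : forall a b c d, cpair a b = cpair c d -> a = c /\ b = d;
  t1_t2 : forall x y, t1 x <> t2 y;
  t1_cpair : forall x y z, t1 x <> cpair y z;
  t2_cpair : forall x y z, t2 x <> cpair y z
}.

Section Nets.
Context {CS : CondStruct} {S : Type}.

(** Conditions = control conditions (inl) + state conditions (inr), disjoint. *)
Definition cond := (ctrl CS + S)%type.
Definition cset := ctrl CS -> Prop.
Definition marking := cond -> Prop.

(** An event is identified with its pair (preconditions, postconditions). *)
Record event := Event { pre : cond -> Prop; post : cond -> Prop }.

Definition ctl_pre (e : event) : cset := fun c => pre e (inl c).
Definition ctl_post (e : event) : cset := fun c => post e (inl c).

Definition subset (A B : cset) := forall c, A c -> B c.
Definition seteq (A B : cset) := forall c, A c <-> B c.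

Definition concession (M : marking) (e : event) : Prop :=
  (forall x, pre e x -> M x) /\ (forall x, M x -> ~ pre e x -> ~ post e x).
Definition fire (M : marking) (e : event) : marking :=
  fun x => (M x /\ ~ pre e x) \/ post e x.
Definition indep (e1 e2 : event) : Prop :=
  forall x, (pre e1 x \/ post e1 x) -> (pre e2 x \/ post e2 x) -> False.

Record net := { Ev : event -> Prop; Ini : cset; Ter : cset }.

Definition cfire (C : cset) (e : event) (C' : cset) : Prop :=
  subset (ctl_pre e) C /\
  (forall c, C c -> ~ ctl_pre e c -> ~ ctl_post e c) /\
  (forall c, C' c <-> ((C c /\ ~ ctl_pre e c) \/ ctl_post e c)).

Inductive creach (N : net) : cset -> Prop :=
| creach0 : creach N (Ini N)
| creach_step : forall C e C', creach N C -> Ev N e -> cfire C e C' -> creach N C'.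

Definition wf_net (N : net) : Prop :=
  (exists c, Ini N c) /\ (exists c, Ter N c) /\
  (forall e, Ev N e -> (exists c, ctl_pre e c) /\ (exists c, ctl_post e c)) /\
  (forall c, Ini N c -> Ter N c -> False) /\
  (forall e c, Ev N e -> ctl_pre e c -> Ter N c -> False) /\
  (forall C, creach N C -> (subset C (Ini N) \/ subset (Ini N) C) -> seteq C (Ini N)) /\
  (forall C, creach N C -> (subset C (Ter N) \/ subset (Ter N) C) -> seteq C (Ter N)).

Record ctx := { knet : net; hole : event }.

Definition wf_ctx (K : ctx) : Prop :=
  wf_net (knet K) /\ Ev (knet K) (hole K) /\
  (forall s, ~ pre (hole K) (inr s)) /\ (forall s, ~ post (hole K) (inr s)) /\
  (exists c, ctl_pre (hole K) c) /\ (exists c, ctl_post (hole K) c) /\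
  (forall c, ctl_pre (hole K) c -> ctl_post (hole K) c -> False).

Definition liftc (g : cset -> cset) (X : cond -> Prop) : cond -> Prop :=
  fun x => match x with
           | inl c => g (fun c' => X (inl c')) c
           | inr s => X (inr s)
           end.
Definition map_ev (g : cset -> cset) (e : event) : event :=
  Event (liftc g (pre e)) (liftc g (post e)).

Definition tagc (f : ctrl CS -> ctrl CS) (X : cset) : cset :=
  fun c => exists c', c = f c' /\ X c'.

Definition glueL (P : ctrl CS -> ctrl CS -> Prop) (X : cset) : cset :=
  fun c => (exists c1 c2, c = cpair CS c1 c2 /\ X c1 /\ P c1 c2)
           \/ (X c /\ ~ exists c2, P c c2).
Definition glueR (P : ctrl CS -> ctrl CS -> Prop) (X : cset) : cset :=
  fun c => (exists c1 c2, c = cpair CS c1 c2 /\ X c2 /\ P c1 c2)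
           \/ (X c /\ ~ exists c1, P c1 c).

Fixpoint run (E : event -> Prop) (M : marking) (l : list event) : Prop :=
  match l with
  | [] => True
  | e :: l' => E e /\ concession M e /\ run E (fire M e) l'
  end.

Definition fire_seq (M : marking) (l : list event) : marking := fold_left fire l M.

Fixpoint marks (M : marking) (l : list event) : list marking :=
  match l with
  | [] => [M]
  | e :: l' => M :: marks (fire M e) l'
  end.

Inductive reach (E : event -> Prop) (M : marking) : marking -> Prop :=
| reach0 : reach E M M
| reach_step : forall M1 e, reach E M M1 -> E e -> concession M1 e -> reach E M (fire M1 e).

Definition form := marking -> list event -> Prop.

Definition form_cat (F G : form) : form :=
  fun M pi => exists pi1 pi2, pi = pi1 ++ pi2 /\ F M pi1 /\ G (fire_seq M pi1) pi2.

Inductive form_star (F : form) : marking -> list event -> Prop :=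
| fs_nil : forall M, form_star F M []
| fs_cons : forall M pi1 pi2, F M pi1 -> form_star F (fire_seq M pi1) pi2 ->
                              form_star F M (pi1 ++ pi2).

Section Subst.
Variables (K : ctx) (N : net).

Definition hpre : cset := ctl_pre (hole K).
Definition hpost : cset := ctl_post (hole K).

(** P_i = 1:•[-] × 2:I(N), P_t = 1:[-]• × 2:T(N), P = P_i ∪ P_t (as relations). *)
Definition Pi_rel (c1 c2 : ctrl CS) : Prop := tagc (t1 CS) hpre c1 /\ tagc (t2 CS) (Ini N) c2.
Definition Pt_rel (c1 c2 : ctrl CS) : Prop := tagc (t1 CS) hpost c1 /\ tagc (t2 CS) (Ter N) c2.
Definition P_rel (c1 c2 : ctrl CS) : Prop := Pi_rel c1 c2 \/ Pt_rel c1 c2.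

Definition Pi_set : cset := fun c => exists c1 c2, c = cpair CS c1 c2 /\ Pi_rel c1 c2.
Definition Pt_set : cset := fun c => exists c1 c2, c = cpair CS c1 c2 /\ Pt_rel c1 c2.

Definition Kev (e : event) : Prop :=
  exists e', Ev (knet K) e' /\ e' <> hole K /\
             e = map_ev (glueL P_rel) (map_ev (tagc (t1 CS)) e').
Definition Nev (e : event) : Prop :=
  exists e', Ev N e' /\ e = map_ev (glueR P_rel) (map_ev (tagc (t2 CS)) e').
Definition EvKN (e : event) : Prop := Kev e \/ Nev e.

Definition I_KN : cset := glueL P_rel (tagc (t1 CS) (Ini (knet K))).
Definition T_KN : cset := glueL P_rel (tagc (t1 CS) (Ter (knet K))).

Definition KN_disjoint : Prop := forall e, Kev e -> Nev e -> False.

Definition init_mark (sigma0 : S -> Prop) : marking :=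
  fun x => match x with inl c => I_KN c | inr s => sigma0 s end.

Definition Ninternal (c : ctrl CS) : Prop :=
  exists c2, c = t2 CS c2 /\ ~ Ini N c2 /\ ~ Ter N c2.
Definition Ncond (c : ctrl CS) : Prop := Pi_set c \/ Pt_set c \/ Ninternal c.

Definition Nmarking (M : marking) : Prop :=
  (forall a a' i, hpre a -> hpre a' -> Ini N i ->
     M (inl (cpair CS (t1 CS a) (t2 CS i))) -> M (inl (cpair CS (t1 CS a') (t2 CS i)))) /\
  (forall x x' t, hpost x -> hpost x' -> Ter N t ->
     M (inl (cpair CS (t1 CS x) (t2 CS t))) -> M (inl (cpair CS (t1 CS x') (t2 CS t)))).

Definition Kmarking (M : marking) : Prop :=
  (forall c, Ninternal c -> ~ M (inl c)) /\
  (forall a i i', hpre a -> Ini N i -> Ini N i' ->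
     M (inl (cpair CS (t1 CS a) (t2 CS i))) -> M (inl (cpair CS (t1 CS a) (t2 CS i')))) /\
  (forall x t t', hpost x -> Ter N t -> Ter N t' ->
     M (inl (cpair CS (t1 CS x) (t2 CS t))) -> M (inl (cpair CS (t1 CS x) (t2 CS t')))).

Definition internal_to_N (c : ctrl CS) : Prop :=
  exists c2, c = t2 CS c2 /\
    (exists e, Ev N e /\ (ctl_pre e c2 \/ ctl_post e c2)) /\
    ~ Ini N c2 /\ ~ Ter N c2.
Definition active (M : marking) : Prop :=
  (forall c, Pi_set c -> M (inl c)) \/ (exists c, internal_to_N c /\ M (inl c)).

Definition touchesP (e : event) : Prop :=
  exists c, (Pi_set c \/ Pt_set c) /\ (pre e (inl c) \/ post e (inl c)).

Definition non_interfering (sigma0 : S -> Prop) : Prop :=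
  forall M, reach EvKN (init_mark sigma0) M ->
    ((forall c, Pi_set c -> M (inl c)) -> forall c, Pt_set c -> ~ M (inl c)) /\
    (active M -> forall e, Kev e -> concession M e -> ~ touchesP e) /\
    (forall e1 e2, concession M e1 -> concession (fire M e1) e2 ->
       ((Nev e1 /\ Kev e2) \/ (Kev e1 /\ Nev e2)) ->
       active M -> active (fire M e1) -> indep e1 e2).

(** C_N (the N-conditions of M) equals X. *)
Definition CN_eq (M : marking) (X : cset) : Prop :=
  forall c, (M (inl c) /\ Ncond c) <-> X c.

Definition Pi0 : form := fun M pi =>
  Forall Kev pi /\ Forall Kmarking (marks M pi).

Definition Pi1 : form := fun M pi =>
  pi <> [] /\ Forall EvKN pi /\ Forall Nmarking (marks M pi) /\
  Forall (fun e => Kev e -> ~ touchesP e) pi /\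
  CN_eq M Pi_set /\ CN_eq (fire_seq M pi) Pt_set /\
  (exists e l, pi = e :: l /\ Nev e) /\
  (exists l e, pi = l ++ [e] /\ Nev e).

End Subst.
End Nets.

(* Main.v *)
Require Import Defs.
From Stdlib Require Import List Classical Lia.
Import ListNotations.

Section Proof.
Variables (CS : CondStruct) (S : Type) (K : @ctx CS S) (N : @net CS S) (sigma0 : S -> Prop).
Hypothesis HK : wf_ctx K.
Hypothesis HN : wf_net N.
Hypothesis Hdisj : KN_disjoint K N.
Hypothesis Hni : non_interfering K N sigma0.

Notation T1 := (t1 CS).
Notation T2 := (t2 CS).
Notation CP := (cpair CS).
Definition pp (a j : ctrl CS) : ctrl CS := CP (T1 a) (T2 j).
Notation hpr := (@hpre CS S K).
Notation hpo := (@hpost CS S K).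
Notation IN := (Ini N).
Notation TN := (Ter N).
Notation PR := (@P_rel CS S K N).

Definition KP (X : cset) : cset := glueL PR (tagc T1 X).
Definition NP (X : cset) : cset := glueR PR (tagc T2 X).
Definition Emb (C : cset) : cset := fun c =>
  (exists a j, c = pp a j /\ hpr a /\ IN j /\ C j) \/
  (exists x j, c = pp x j /\ hpo x /\ TN j /\ C j) \/
  (exists j, c = T2 j /\ ~ IN j /\ ~ TN j /\ C j).

Lemma hpre_ne : exists a, hpr a.
Proof. destruct HK as (_&_&_&_&H&_). exact H. Qed.
Lemma hpost_ne : exists a, hpo a.
Proof. destruct HK as (_&_&_&_&_&H&_). exact H. Qed.
Lemma hpp : forall a, hpr a -> hpo a -> False.
Proof. destruct HK as (_&_&_&_&_&_&H). exact H. Qed.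
Lemma Ini_ne : exists a, IN a.
Proof. destruct HN as (H&_). exact H. Qed.
Lemma Ter_ne : exists a, TN a.
Proof. destruct HN as (_&H&_). exact H. Qed.
Lemma IT : forall c, IN c -> TN c -> False.
Proof. destruct HN as (_&_&_&H&_). exact H. Qed.
Lemma seteqI : forall C, creach N C -> (subset C IN \/ subset IN C) -> seteq C IN.
Proof. destruct HN as (_&_&_&_&_&H&_). exact H. Qed.
Lemma seteqT : forall C, creach N C -> (subset C TN \/ subset TN C) -> seteq C TN.
Proof. destruct HN as (_&_&_&_&_&_&H). exact H. Qed.
Lemma preT : forall e c, Ev N e -> ctl_pre e c -> TN c -> False.
Proof. destruct HN as (_&_&_&_&H&_). exact H. Qed.
Lemma holeT : forall a, hpr a -> Ter (knet K) a -> False.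
Proof.
  destruct HK as (HKn&Hh&_). destruct HKn as (_&_&_&_&H&_).
  intros a Ha HT. exact (H _ _ Hh Ha HT).
Qed.

Lemma tagc_f (f : ctrl CS -> ctrl CS) X a :
  (forall x y, f x = f y -> x = y) -> (tagc f X (f a) <-> X a).
Proof.
  intros Hf; split.
  - intros (c' & E & H). apply Hf in E. subst. exact H.
  - intros H. exists a. auto.
Qed.

Lemma t1i : forall x y, T1 x = T1 y -> x = y. Proof. apply t1_inj. Qed.
Lemma t2i : forall x y, T2 x = T2 y -> x = y. Proof. apply t2_inj. Qed.

Lemma PR_iff a j : PR (T1 a) (T2 j) <-> (hpr a /\ IN j) \/ (hpo a /\ TN j).
Proof.
  unfold P_rel, Pi_rel, Pt_rel.
  rewrite !(tagc_f T1 _ _ t1i), !(tagc_f T2 _ _ t2i). tauto.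
Qed.

Lemma PR_shape c1 c2 : PR c1 c2 -> exists a j, c1 = T1 a /\ c2 = T2 j.
Proof.
  unfold P_rel, Pi_rel, Pt_rel.
  intros [[(a&Ea&_) (j&Ej&_)] | [(a&Ea&_) (j&Ej&_)]]; eauto.
Qed.

Lemma pp_inj a j a' j' : pp a j = pp a' j' -> a = a' /\ j = j'.
Proof.
  unfold pp. intros E. apply cpair_inj in E as [E1 E2].
  apply t1i in E1. apply t2i in E2. auto.
Qed.

Lemma KP_pair X a j : KP X (pp a j) <-> X a /\ ((hpr a /\ IN j) \/ (hpo a /\ TN j)).
Proof.
  unfold KP, glueL. split.
  - intros [(c1&c2&E&H1&H2) | (H1&_)].
    + unfold pp in E. apply cpair_inj in E as [<- <-].
      rewrite (tagc_f T1 _ _ t1i) in H1. rewrite PR_iff in H2. auto.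
    + destruct H1 as (c'&E&_). unfold pp in E. symmetry in E. now apply t1_cpair in E.
  - intros [HX HP]. left. exists (T1 a), (T2 j). split; [reflexivity|].
    rewrite (tagc_f T1 _ _ t1i), PR_iff. auto.
Qed.

Lemma KP_t2 X j : ~ KP X (T2 j).
Proof.
  unfold KP, glueL. intros [(c1&c2&E&_) | ((c'&E&_)&_)].
  - now apply t2_cpair in E.
  - symmetry in E. now apply t1_t2 in E.
Qed.

Lemma NP_pair X a j : NP X (pp a j) <-> X j /\ ((hpr a /\ IN j) \/ (hpo a /\ TN j)).
Proof.
  unfold NP, glueR. split.
  - intros [(c1&c2&E&H1&H2) | (H1&_)].
    + unfold pp in E. apply cpair_inj in E as [<- <-].
      rewrite (tagc_f T2 _ _ t2i) in H1. rewrite PR_iff in H2. auto.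
    + destruct H1 as (c'&E&_). unfold pp in E. symmetry in E. now apply t2_cpair in E.
  - intros [HX HP]. left. exists (T1 a), (T2 j). split; [reflexivity|].
    rewrite (tagc_f T2 _ _ t2i), PR_iff. auto.
Qed.

Lemma NP_t2 X j : NP X (T2 j) <-> X j /\ ~ IN j /\ ~ TN j.
Proof.
  unfold NP, glueR. split.
  - intros [(c1&c2&E&_) | (H1&H2)].
    + now apply t2_cpair in E.
    + rewrite (tagc_f T2 _ _ t2i) in H1. split; [exact H1|].
      destruct hpre_ne as [a Ha]. destruct hpost_ne as [x Hx].
      split; intros Hj; apply H2.
      * exists (T1 a). apply PR_iff. auto.
      * exists (T1 x). apply PR_iff. auto.
  - intros (HX&H1&H2). right. split.
    + now rewrite (tagc_f T2 _ _ t2i).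
    + intros (c1&Hc). destruct (PR_shape _ _ Hc) as (a&j'&->&E).
      apply t2i in E. subst. apply PR_iff in Hc. tauto.
Qed.

Lemma Emb_pair C a j : Emb C (pp a j) <-> ((hpr a /\ IN j) \/ (hpo a /\ TN j)) /\ C j.
Proof.
  unfold Emb. split.
  - intros [(a'&j'&E&H) | [(a'&j'&E&H) | (j'&E&_)]].
    + apply pp_inj in E as [-> ->]. tauto.
    + apply pp_inj in E as [-> ->]. tauto.
    + unfold pp in E. symmetry in E. now apply t2_cpair in E.
  - intros [[[H1 H2]|[H1 H2]] H3]; [left|right;left]; exists a, j; auto.
Qed.

Lemma Emb_t2 C j : Emb C (T2 j) <-> ~ IN j /\ ~ TN j /\ C j.
Proof.
  unfold Emb. split.
  - intros [(a'&j'&E&H) | [(a'&j'&E&H) | (j'&E&H)]].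
    + now apply t2_cpair in E.
    + now apply t2_cpair in E.
    + apply t2i in E. subst. tauto.
  - intros H. right; right. exists j. auto.
Qed.


Lemma Pi_set_iff c : Pi_set K N c <-> exists a j, c = pp a j /\ hpr a /\ IN j.
Proof.
  unfold Pi_set, Pi_rel. split.
  - intros (c1&c2&->&(a&->&Ha)&(j&->&Hj)). exists a, j. auto.
  - intros (a&j&->&Ha&Hj). exists (T1 a), (T2 j). split; [reflexivity|].
    rewrite (tagc_f T1 _ _ t1i), (tagc_f T2 _ _ t2i). auto.
Qed.

Lemma Pt_set_iff c : Pt_set K N c <-> exists a j, c = pp a j /\ hpo a /\ TN j.
Proof.
  unfold Pt_set, Pt_rel. split.
  - intros (c1&c2&->&(a&->&Ha)&(j&->&Hj)). exists a, j. auto.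
  - intros (a&j&->&Ha&Hj). exists (T1 a), (T2 j). split; [reflexivity|].
    rewrite (tagc_f T1 _ _ t1i), (tagc_f T2 _ _ t2i). auto.
Qed.

Lemma Ncond_rep c : Ncond K N c ->
  exists j, (forall X, NP X c <-> X j) /\ (forall C, Emb C c <-> C j).
Proof.
  unfold Ncond. intros [H|[H|H]].
  - apply Pi_set_iff in H as (a&j&->&Ha&Hj). exists j.
    split; intros; [rewrite NP_pair | rewrite Emb_pair]; tauto.
  - apply Pt_set_iff in H as (a&j&->&Ha&Hj). exists j.
    split; intros; [rewrite NP_pair | rewrite Emb_pair]; tauto.
  - destruct H as (j&->&H1&H2). exists j.
    split; intros; [rewrite NP_t2 | rewrite Emb_t2]; tauto.
Qed.

Lemma rep_exists j : exists c, Ncond K N c /\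
  (forall X, NP X c <-> X j) /\ (forall C, Emb C c <-> C j).
Proof.
  destruct (classic (IN j)) as [Hi|Hi].
  - destruct hpre_ne as [a Ha]. exists (pp a j). split.
    + left. apply Pi_set_iff. eauto.
    + split; intros; [rewrite NP_pair | rewrite Emb_pair]; tauto.
  - destruct (classic (TN j)) as [Ht|Ht].
    + destruct hpost_ne as [a Ha]. exists (pp a j). split.
      * right; left. apply Pt_set_iff. eauto.
      * split; intros; [rewrite NP_pair | rewrite Emb_pair]; tauto.
    + exists (T2 j). split.
      * right; right. exists j. auto.
      * split; intros; [rewrite NP_t2 | rewrite Emb_t2]; tauto.
Qed.

Lemma Emb_Ncond C c : Emb C c -> Ncond K N c.
Proof.
  intros [(a&j&->&H) | [(a&j&->&H) | (j&->&H)]].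
  - left. apply Pi_set_iff. exists a, j. tauto.
  - right; left. apply Pt_set_iff. exists a, j. tauto.
  - right; right. exists j. tauto.
Qed.

Definition Inside (M : @marking CS S) (C : cset) : Prop :=
  creach N C /\ CN_eq K N M (Emb C).

Lemma Kpre (e' : @event CS S) c : pre (map_ev (glueL PR) (map_ev (tagc T1) e')) (inl c) <-> KP (ctl_pre e') c.
Proof. reflexivity. Qed.
Lemma Kpost (e' : @event CS S) c : post (map_ev (glueL PR) (map_ev (tagc T1) e')) (inl c) <-> KP (ctl_post e') c.
Proof. reflexivity. Qed.
Lemma Npre (e' : @event CS S) c : pre (map_ev (glueR PR) (map_ev (tagc T2) e')) (inl c) <-> NP (ctl_pre e') c.
Proof. reflexivity. Qed.
Lemma Npost (e' : @event CS S) c : post (map_ev (glueR PR) (map_ev (tagc T2) e')) (inl c) <-> NP (ctl_post e') c.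
Proof. reflexivity. Qed.


Lemma Inside_Nmarking M C : Inside M C -> Nmarking K N M.
Proof.
  intros [_ HC]. split.
  - intros a a' i Ha Ha' Hi HM.
    assert (E : Emb C (pp a i)).
    { apply HC. split; [exact HM|]. left. apply Pi_set_iff. eauto. }
    apply Emb_pair in E. apply (HC (pp a' i)). apply Emb_pair. tauto.
  - intros a a' i Ha Ha' Hi HM.
    assert (E : Emb C (pp a i)).
    { apply HC. split; [exact HM|]. right; left. apply Pt_set_iff. eauto. }
    apply Emb_pair in E. apply (HC (pp a' i)). apply Emb_pair. tauto.
Qed.

Lemma Kev_notouch_Ncond e c : Kev K N e -> ~ touchesP K N e -> Ncond K N c ->
  ~ pre e (inl c) /\ ~ post e (inl c).
Proof.
  intros HKe Ht [H|[H|H]].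
  - split; intro Hp; apply Ht; exists c; auto.
  - split; intro Hp; apply Ht; exists c; auto.
  - destruct HKe as (e'&_&_&->). destruct H as (j&->&_).
    rewrite Kpre, Kpost. split; apply KP_t2.
Qed.

Lemma K_step_Inside M C e : Inside M C -> Kev K N e -> ~ touchesP K N e ->
  Inside (fire M e) C.
Proof.
  intros [Hc HC] HKe Ht. split; [exact Hc|].
  unfold CN_eq in *. intros c. rewrite <- HC. unfold fire. split.
  - intros [H1 H2]. destruct (Kev_notouch_Ncond _ _ HKe Ht H2). tauto.
  - intros [H1 H2]. split; [|exact H2]. destruct (Kev_notouch_Ncond _ _ HKe Ht H2). tauto.
Qed.

Definition cnext (C : cset) (e' : @event CS S) : cset :=
  fun c => (C c /\ ~ ctl_pre e' c) \/ ctl_post e' c.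

Lemma N_step_Inside M C e' : Inside M C -> Ev N e' ->
  concession M (map_ev (glueR PR) (map_ev (tagc T2) e')) ->
  Inside (fire M (map_ev (glueR PR) (map_ev (tagc T2) e'))) (cnext C e').
Proof.
  intros [Hc HC] Hev [Hcon1 Hcon2].
  assert (HM : forall r j, Ncond K N r -> (forall C0, Emb C0 r <-> C0 j) ->
                (M (inl r) <-> C j)).
  { intros r j Hr HE. rewrite <- (HE C). unfold CN_eq in HC. rewrite <- HC. tauto. }
  split.
  - apply creach_step with C e'; [exact Hc|exact Hev|]. split; [|split].
    + intros j Hj. destruct (rep_exists j) as (r&Hr&HN1&HE).
      apply (HM r j Hr HE). apply Hcon1. simpl. apply (HN1 (ctl_pre e')). exact Hj.
    + intros j Hj Hnp Hp. destruct (rep_exists j) as (r&Hr&HN1&HE).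
      apply (Hcon2 (inl r)).
      * apply (HM r j Hr HE). exact Hj.
      * simpl. rewrite (HN1 (ctl_pre e')). exact Hnp.
      * simpl. apply (HN1 (ctl_post e')). exact Hp.
    + intros c. unfold cnext. tauto.
  - intros c. unfold fire. split.
    + intros [H1 H2]. destruct (Ncond_rep c H2) as (j&HN1&HE).
      apply HE. unfold cnext. simpl in H1.
      rewrite (HN1 (ctl_pre e')), (HN1 (ctl_post e')) in H1.
      rewrite (HM c j H2 HE) in H1. tauto.
    + intros H. assert (H2 := Emb_Ncond _ _ H). split; [|exact H2].
      destruct (Ncond_rep c H2) as (j&HN1&HE). apply HE in H.
      simpl. rewrite (HN1 (ctl_pre e')), (HN1 (ctl_post e')).
      rewrite (HM c j H2 HE). unfold cnext in H. tauto.
Qed.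


Lemma creach_origin C : creach N C -> forall j, C j ->
  IN j \/ exists e, Ev N e /\ ctl_post e j.
Proof.
  induction 1 as [|C e C' Hc IH Hev (_&_&Hiff)]; intros j Hj.
  - left. exact Hj.
  - apply Hiff in Hj as [[Hj _]|Hj].
    + apply IH. exact Hj.
    + right. eauto.
Qed.

Lemma Emb_I C c : seteq C IN -> (Emb C c <-> Pi_set K N c).
Proof.
  intros Hs. rewrite Pi_set_iff. unfold Emb. split.
  - intros [(a&j&->&H) | [(a&j&->&H) | (j&->&H)]].
    + exists a, j. tauto.
    + exfalso. apply (IT j); [apply Hs|]; tauto.
    + exfalso. destruct H as (H1&H2&H3). apply Hs in H3. tauto.
  - intros (a&j&->&Ha&Hj). left. exists a, j. repeat split; auto. apply Hs; auto.
Qed.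

Lemma Emb_T C c : seteq C TN -> (Emb C c <-> Pt_set K N c).
Proof.
  intros Hs. rewrite Pt_set_iff. unfold Emb. split.
  - intros [(a&j&->&H) | [(a&j&->&H) | (j&->&H)]].
    + exfalso. apply (IT j); [|apply Hs]; tauto.
    + exists a, j. tauto.
    + exfalso. destruct H as (H1&H2&H3). apply Hs in H3. tauto.
  - intros (a&j&->&Ha&Hj). right; left. exists a, j. repeat split; auto. apply Hs; auto.
Qed.

Lemma Inside_T_Kmarking M C : Inside M C -> seteq C TN -> Kmarking K N M.
Proof.
  intros [_ HC] Hs.
  assert (H : forall c, M (inl c) /\ Ncond K N c <-> Pt_set K N c).
  { intros c. rewrite <- (Emb_T C c Hs). apply HC. }
  split; [|split].
  - intros c Hc HM. assert (Hp : Pt_set K N c) by (apply H; split; [exact HM|right;right;exact Hc]).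
    apply Pt_set_iff in Hp as (a&j&->&_). destruct Hc as (j'&E&_).
    unfold pp in E. symmetry in E. now apply t2_cpair in E.
  - intros a i i' Ha Hi Hi' HM. exfalso.
    assert (Hp : Pt_set K N (pp a i)).
    { apply H. split; [exact HM|]. left. apply Pi_set_iff. eauto. }
    apply Pt_set_iff in Hp as (x&t&E&Hx&Ht). apply pp_inj in E as [<- <-].
    exact (hpp a Ha Hx).
  - intros x t t' Hx Ht Ht' HM. apply (H (pp x t')). apply Pt_set_iff. eauto.
Qed.

Lemma Ncond_pp a j : (hpr a /\ IN j) \/ (hpo a /\ TN j) -> Ncond K N (pp a j).
Proof.
  intros [H|H]; [left; apply Pi_set_iff | right; left; apply Pt_set_iff]; exists a, j; tauto.
Qed.

Lemma block M C e' a (Q : cset) j0 j1 j :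
  CN_eq K N M (Emb C) ->
  concession M (map_ev (glueL PR) (map_ev (tagc T1) e')) ->
  (forall j, Q j -> (hpr a /\ IN j) \/ (hpo a /\ TN j)) ->
  Q j0 -> ~ C j0 -> Q j1 -> C j1 -> Q j ->
  (KP (ctl_pre e') (pp a j) \/ KP (ctl_post e') (pp a j)) -> False.
Proof.
  intros HC [Hc1 Hc2] HQ Q0 C0 Q1 C1 Qj Hk.
  assert (Hprepost : ctl_pre e' a \/ ctl_post e' a).
  { rewrite !KP_pair in Hk. tauto. }
  destruct (classic (ctl_pre e' a)) as [Hp|Hp].
  - apply C0. assert (HM : M (inl (pp a j0))).
    { apply Hc1. simpl. apply KP_pair. auto. }
    assert (E : Emb C (pp a j0)) by (apply HC; split; [exact HM| apply Ncond_pp; auto]).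
    apply Emb_pair in E. tauto.
  - apply (Hc2 (inl (pp a j1))).
    + apply HC. apply Emb_pair. auto.
    + rewrite Kpre, KP_pair. tauto.
    + apply Kpost, KP_pair. split; [tauto|auto].
Qed.

Lemma notouch M C e : reach (EvKN K N) (init_mark K N sigma0) M -> Inside M C ->
  ~ seteq C TN -> Kev K N e -> concession M e -> ~ touchesP K N e.
Proof.
  intros Hr [Hc HC] HnT HKe Hcon.
  destruct (Hni M Hr) as (_&H2&_).
  destruct (classic (subset IN C)) as [HI|HI].
  { assert (Hact : active K N M).
    { left. intros c Hp. apply (HC c). apply (Emb_I C c); [apply seteqI; auto|exact Hp]. }
    exact (H2 Hact e HKe Hcon). }
  destruct (classic (exists j, C j /\ ~ IN j /\ ~ TN j)) as [(j&Cj&H1&H3)|Hint].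
  { assert (Hact : active K N M).
    2: exact (H2 Hact e HKe Hcon).
    right. destruct (creach_origin C Hc j Cj) as [?|(e0&He0&Hp0)]; [tauto|].
    exists (T2 j). split.
    - exists j. repeat split; eauto.
    - apply (HC (T2 j)). apply Emb_t2. auto. }
  assert (Hcase : forall j, C j -> IN j \/ TN j).
  { intros j Cj. destruct (classic (IN j)); [auto|]. destruct (classic (TN j)); [auto|].
    exfalso. apply Hint. eauto. }
  assert (Hi0 : exists i0, IN i0 /\ ~ C i0).
  { apply NNPP. intro Hn. apply HI. intros i Hi. apply NNPP. intro Hc'. apply Hn. eauto. }
  assert (Ht0 : exists t0, TN t0 /\ ~ C t0).
  { apply NNPP. intro Hn. apply HnT. apply seteqT; [exact Hc|]. right.
    intros i Hi. apply NNPP. intro Hc'. apply Hn. eauto. }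
  assert (Hi1 : exists i1, IN i1 /\ C i1).
  { apply NNPP. intro Hn. apply HnT. apply seteqT; [exact Hc|]. left.
    intros i Ci. destruct (Hcase i Ci); [|auto]. exfalso. apply Hn. eauto. }
  assert (Ht1 : exists t1, TN t1 /\ C t1).
  { apply NNPP. intro Hn. apply HI. intros i Hi.
    apply (seteqI C Hc); [|exact Hi]. left.
    intros j Cj. destruct (Hcase j Cj); [auto|]. exfalso. apply Hn. eauto. }
  destruct Hi0 as (i0&Hi0&Ci0), Ht0 as (t0&Ht0&Ct0), Hi1 as (i1&Hi1&Ci1), Ht1 as (t1'&Ht1&Ct1).
  destruct HKe as (e'&Hev&_&->).
  intros (c&Hset&Hpp).
  destruct Hset as [Hs|Hs].
  - apply Pi_set_iff in Hs as (a&j&->&Ha&Hj).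
    apply (block M C e' a IN i0 i1 j HC Hcon); auto.
  - apply Pt_set_iff in Hs as (a&j&->&Ha&Hj).
    apply (block M C e' a TN t0 t1' j HC Hcon); auto.
Qed.

Lemma End_contra M C : Inside M C -> ~ seteq C TN ->
  (forall j, ~ IN j -> ~ TN j -> ~ M (inl (T2 j))) ->
  (forall a i, hpr a -> IN i -> ~ M (inl (pp a i))) -> False.
Proof.
  intros [Hc HC] HnT E1 E2.
  destruct (classic (exists j, C j /\ IN j)) as [(j&Cj&Hj)|H1].
  { destruct hpre_ne as [a Ha]. apply (E2 a j Ha Hj). apply (HC (pp a j)).
    apply Emb_pair. auto. }
  destruct (classic (exists j, C j /\ ~ IN j /\ ~ TN j)) as [(j&Cj&Hj1&Hj2)|H2].
  { apply (E1 j Hj1 Hj2). apply (HC (T2 j)). apply Emb_t2. auto. }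
  apply HnT. apply seteqT; [exact Hc|]. left. intros j Cj.
  apply NNPP. intro Hn. destruct (classic (IN j)); [apply H1|apply H2]; eauto.
Qed.


Lemma K_fire_Kmarking M e : Kmarking K N M -> Kev K N e -> Kmarking K N (fire M e).
Proof.
  intros (K1&K2&K3) (e'&Hev&Hne&->). split; [|split].
  - intros c Hc [[HM _]|Hp]; [exact (K1 c Hc HM)|].
    destruct Hc as (j&->&_). apply Kpost in Hp. exact (KP_t2 _ _ Hp).
  - intros a i i' Ha Hi Hi'. unfold fire.
    change (CP (T1 a) (T2 i)) with (pp a i). change (CP (T1 a) (T2 i')) with (pp a i').
    rewrite !Kpre, !Kpost, !KP_pair.
    intros [[HM Hn]|Hp]; [left; split; [apply (K2 a i i'); auto | tauto] | right; tauto].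
  - intros a i i' Ha Hi Hi'. unfold fire.
    change (CP (T1 a) (T2 i)) with (pp a i). change (CP (T1 a) (T2 i')) with (pp a i').
    rewrite !Kpre, !Kpost, !KP_pair.
    intros [[HM Hn]|Hp]; [left; split; [apply (K3 a i i'); auto | tauto] | right; tauto].
Qed.

Lemma KP_Kmarking (M : @marking CS S) X : (forall c, M (inl c) <-> KP X c) -> Kmarking K N M.
Proof.
  intros HM. split; [|split].
  - intros c (j&->&_) H. apply HM in H. exact (KP_t2 _ _ H).
  - intros a i i' Ha Hi Hi'.
    change (CP (T1 a) (T2 i)) with (pp a i). change (CP (T1 a) (T2 i')) with (pp a i').
    rewrite !HM, !KP_pair. tauto.
  - intros a i i' Ha Hi Hi'.
    change (CP (T1 a) (T2 i)) with (pp a i). change (CP (T1 a) (T2 i')) with (pp a i').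
    rewrite !HM, !KP_pair. tauto.
Qed.

Lemma init_Kmarking : Kmarking K N (init_mark K N sigma0).
Proof. apply (KP_Kmarking _ (Ini (knet K))). intros c. reflexivity. Qed.

Lemma Nev_from_Kmarking M e : reach (EvKN K N) (init_mark K N sigma0) M ->
  Kmarking K N M -> Nev K N e -> concession M e -> Inside M IN.
Proof.
  intros Hr (K1&K2&K3) (e'&Hev&->) [Hc1 Hc2].
  destruct HN as (_&_&Hevs&_).
  destruct (proj1 (Hevs e' Hev)) as [c0 Hc0].
  assert (Hi0 : IN c0).
  { apply NNPP. intro Hn. assert (Ht : ~ TN c0) by (intro; apply (preT e' c0); auto).
    apply (K1 (T2 c0)); [exists c0; auto|]. apply Hc1. apply Npre, NP_t2. auto. }
  assert (HPi : forall a i, hpr a -> IN i -> M (inl (pp a i))).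
  { intros a i Ha Hi. apply (K2 a c0 i Ha Hi0 Hi). apply Hc1. apply Npre, NP_pair. auto. }
  assert (HPi' : forall c, Pi_set K N c -> M (inl c)).
  { intros c Hp. apply Pi_set_iff in Hp as (a&j&->&Ha&Hj). auto. }
  destruct (Hni M Hr) as (H1&_).
  assert (HPt := H1 HPi').
  split; [constructor|].
  intros c. rewrite (Emb_I IN c (fun _ => iff_refl _)). split.
  - intros [HM [Hp|[Hp|Hp]]]; [exact Hp| exfalso; exact (HPt c Hp HM) | exfalso; exact (K1 c Hp HM)].
  - intros Hp. split; [auto| left; exact Hp].
Qed.


Definition EndM (M : @marking CS S) : Prop :=
  (forall j, ~ IN j -> ~ TN j -> ~ M (inl (T2 j))) /\
  (forall a i, hpr a -> IN i -> ~ M (inl (pp a i))).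

Notation M0 := (init_mark K N sigma0).

Lemma phase : forall pi M C, reach (EvKN K N) M0 M -> Inside M C -> ~ seteq C TN ->
  run (EvKN K N) M pi -> EndM (fire_seq M pi) ->
  exists pa pb, pi = pa ++ pb /\ pa <> [] /\ Forall (EvKN K N) pa /\
    Forall (Nmarking K N) (marks M pa) /\
    Forall (fun e => Kev K N e -> ~ touchesP K N e) pa /\
    CN_eq K N (fire_seq M pa) (Pt_set K N) /\ Kmarking K N (fire_seq M pa) /\
    reach (EvKN K N) M0 (fire_seq M pa) /\ (exists l e, pa = l ++ [e] /\ Nev K N e).
Proof.
  induction pi as [|a pi IH]; intros M C Hr HI HnT Hrun HE.
  - exfalso. destruct HE as [E1 E2]. exact (End_contra M C HI HnT E1 E2).
  - destruct Hrun as (HEv&Hcon&Hrun').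
    assert (Hr' : reach (EvKN K N) M0 (fire M a)) by (apply reach_step; auto).
    destruct HEv as [Hk|Hn].
    + assert (Ht := notouch M C a Hr HI HnT Hk Hcon).
      assert (HI' := K_step_Inside M C a HI Hk Ht).
      destruct (IH (fire M a) C Hr' HI' HnT Hrun' HE)
        as (pa&pb&Epi&Hne&F1&F2&F3&F4&F5&F6&(l&e&El&He)).
      exists (a :: pa), pb. split; [simpl; rewrite Epi; reflexivity|].
      split; [discriminate|]. split; [constructor; [left; exact Hk|exact F1]|].
      split; [constructor; [exact (Inside_Nmarking M C HI)|exact F2]|].
      split; [constructor; [intros _; exact Ht|exact F3]|].
      split; [exact F4|]. split; [exact F5|]. split; [exact F6|].
      exists (a :: l), e. rewrite El. split; [reflexivity|exact He].
    + assert (Hn' := Hn). destruct Hn' as (e'&Hev&Ea).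
      assert (HI' : Inside (fire M a) (cnext C e')).
      { rewrite Ea in *. apply N_step_Inside; auto. }
      destruct (classic (seteq (cnext C e') TN)) as [Hs|Hs].
      * exists [a], pi. split; [reflexivity|]. split; [discriminate|].
        split; [constructor; [right; exact Hn|constructor]|].
        split; [constructor; [exact (Inside_Nmarking M C HI)|constructor; [exact (Inside_Nmarking _ _ HI')|constructor]]|].
        split; [constructor; [intros Hk; exfalso; exact (Hdisj a Hk Hn)|constructor]|].
        split.
        { intros c. rewrite <- (Emb_T _ c Hs). apply (proj2 HI'). }
        split; [exact (Inside_T_Kmarking _ _ HI' Hs)|]. split; [exact Hr'|].
        exists [], a. auto.
      * destruct (IH (fire M a) (cnext C e') Hr' HI' Hs Hrun' HE)
          as (pa&pb&Epi&Hne&F1&F2&F3&F4&F5&F6&(l&e&El&He)).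
        exists (a :: pa), pb. split; [simpl; rewrite Epi; reflexivity|].
        split; [discriminate|]. split; [constructor; [right; exact Hn|exact F1]|].
        split; [constructor; [exact (Inside_Nmarking M C HI)|exact F2]|].
        split; [constructor; [intros Hk; exfalso; exact (Hdisj a Hk Hn)|exact F3]|].
        split; [exact F4|]. split; [exact F5|]. split; [exact F6|].
        exists (a :: l), e. rewrite El. split; [reflexivity|exact He].
Qed.


Lemma run_app E : forall l1 l2 (M : @marking CS S), run E M (l1 ++ l2) -> run E (fire_seq M l1) l2.
Proof.
  induction l1 as [|a l1 IH]; intros l2 M H; [exact H|].
  destruct H as (_&_&H). exact (IH l2 (fire M a) H).
Qed.

Lemma fire_seq_app l1 l2 (M : @marking CS S) : fire_seq M (l1 ++ l2) = fire_seq (fire_seq M l1) l2.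
Proof. unfold fire_seq. apply fold_left_app. Qed.

Lemma outside : forall n pi M, length pi <= n -> reach (EvKN K N) M0 M -> Kmarking K N M ->
  run (EvKN K N) M pi -> EndM (fire_seq M pi) ->
  form_cat (Pi0 K N) (form_star (form_cat (Pi1 K N) (Pi0 K N))) M pi.
Proof.
  induction n as [|n IH]; intros pi M Hl Hr HKm Hrun HE; destruct pi as [|a pi].
  1,3: exists [], []; split; [reflexivity|]; split;
       [split; constructor; [exact HKm|constructor] | constructor].
  - simpl in Hl. lia.
  - destruct Hrun as (HEv&Hcon&Hrun').
    assert (Hr' : reach (EvKN K N) M0 (fire M a)) by (apply reach_step; auto).
    destruct HEv as [Hk|Hn].
    + simpl in Hl.
      destruct (IH pi (fire M a) ltac:(lia) Hr' (K_fire_Kmarking M a HKm Hk) Hrun' HE)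
        as (pi1&pi2&E&(P1&P2)&Fs).
      exists (a :: pi1), pi2. split; [simpl; rewrite E; reflexivity|].
      split; [split; constructor; auto|exact Fs].
    + assert (HI := Nev_from_Kmarking M a Hr HKm Hn Hcon).
      assert (HnT : ~ seteq IN TN).
      { intros Hs. destruct Ini_ne as [i Hi]. apply (IT i Hi). apply Hs. exact Hi. }
      destruct (phase (a :: pi) M IN Hr HI HnT (conj (or_intror Hn) (conj Hcon Hrun')) HE)
        as (pa&pb&Epi&Hne&F1&F2&F3&F4&F5&F6&Hlast).
      assert (Hlen : length pb <= n).
      { assert (L := f_equal (@length _) Epi). rewrite length_app in L. simpl in L, Hl.
        destruct pa; [contradiction|]. simpl in L. lia. }
      assert (Hrunb : run (EvKN K N) (fire_seq M pa) pb).
      { apply run_app. rewrite <- Epi. exact (conj (or_intror Hn) (conj Hcon Hrun')). }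
      assert (HEb : EndM (fire_seq (fire_seq M pa) pb)).
      { rewrite <- fire_seq_app, <- Epi. exact HE. }
      destruct (IH pb (fire_seq M pa) Hlen F6 F5 Hrunb HEb) as (p0&q&Eq&P0&Fs).
      exists [], (a :: pi). split; [reflexivity|]. split.
      { split; constructor; [exact HKm|constructor]. }
      simpl. rewrite Epi, Eq, app_assoc. apply fs_cons.
      * exists pa, p0. split; [reflexivity|]. split; [|exact P0].
        split; [exact Hne|]. split; [exact F1|]. split; [exact F2|]. split; [exact F3|].
        split. { intros c. rewrite <- (Emb_I IN c (fun _ => iff_refl _)). apply (proj2 HI). }
        split; [exact F4|]. split; [|exact Hlast].
        destruct pa as [|e l]; [contradiction|]. simpl in Epi. injection Epi as <- _.
        exists a, l. auto.
      * rewrite fire_seq_app. exact Fs.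
Qed.

Lemma mainA8 (pi : list event)
  (Hrun : run (EvKN K N) (init_mark K N sigma0) pi)
  (Hcomplete : forall c, fire_seq (init_mark K N sigma0) pi (inl c) <-> T_KN K N c) :
  form_cat (Pi0 K N) (form_star (form_cat (Pi1 K N) (Pi0 K N)))
    (init_mark K N sigma0) pi.
Proof.
  apply (outside (length pi)); auto.
  - constructor.
  - exact init_Kmarking.
  - split.
    + intros j _ _ H. apply Hcomplete in H. exact (KP_t2 _ _ H).
    + intros a i Ha Hi H. apply Hcomplete in H. apply KP_pair in H.
      destruct H as [HT _]. exact (holeT a Ha HT).
Qed.

End Proof.

Theorem lemmaA8 (CS : CondStruct) (S : Type) (K : @ctx CS S) (N : @net CS S)
  (sigma0 : S -> Prop)
  (HK : wf_ctx K) (HN : wf_net N) (Hdisj : KN_disjoint K N)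
  (Hni : non_interfering K N sigma0)
  (pi : list event)
  (Hrun : run (EvKN K N) (init_mark K N sigma0) pi)
  (Hcomplete : forall c, fire_seq (init_mark K N sigma0) pi (inl c) <-> T_KN K N c) :
  form_cat (Pi0 K N) (form_star (form_cat (Pi1 K N) (Pi0 K N)))
    (init_mark K N sigma0) pi.
Proof.
  eapply mainA8; eassumption.
Qed.
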